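(* Local search based on the 1-norm of the inverse has no constant approximation ratio for full row rank matrices: for all integers $r\ge2$ and $n\ge 2r$ and every $K>0$, there exist a matrix $A\in\mathbb{R}^{r\times n}$ of rank $r$ and ordered $r$-subsets $T,T'$ of $\{1,\dots,n\}$ such that $A[:,T]$ is a local minimizer for the 1-norm of the inverse on the set of $r\times r$ nonsingular submatrices of $A$, $A[:,T']$ is nonsingular, and $\|A[:,T]^{-1}\|_1\ge K\,\|A[:,T']^{-1}\|_1$.
   Context: $A[:,T]$ is the submatrix of $A$ formed by the columns indexed by $T$. $\|X\|_1=\sum_{i,j}|X_{ij}|$. For a full row rank $r\times n$ matrix $A$, a nonsingular submatrix $A[:,T]$ is a local minimizer for the 1-norm of the inverse on the set of $r\times r$ nonsingular submatrices of $A$ if $\|A[:,T]^{-1}\|_1$ cannot be decreased by swapping an element of $T$ with an element of its complement in $\{1,\dots,n\}$ (among swaps yielding a nonsingular submatrix). For any $T'$ with $A[:,T']$ nonsingular, placing $A[:,T']^{-1}$ in rows $T'$ and zeros elsewhere gives a matrix $H$ with $AH=I_r$, so the conclusion shows the ratio of the local-search output's 1-norm to the optimum is unbounded. *)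

(* Defs.v *)
From mathcomp Require Import all_boot all_order all_algebra.
From mathcomp Require Import reals.
Set Implicit Arguments. Unset Strict Implicit. Unset Printing Implicit Defensive.
Import Order.TTheory GRing.Theory Num.Theory.
Local Open Scope ring_scope.

Definition mnorm1 (R : numDomainType) (m n : nat) (X : 'M[R]_(m, n)) : R :=
  \sum_(i < m) \sum_(j < n) `|X i j|.

(* An ordered r-subset of {1..n} is an injective map T : 'I_r -> 'I_n;
   A[:,T] is colsub T A. *)

Definition swap_idx (r n : nat) (T : 'I_r -> 'I_n) (i : 'I_r) (j : 'I_n)
  : 'I_r -> 'I_n := fun k => if k == i then j else T k.

Definition local_min_inv1 (R : realFieldType) (r n : nat)
  (A : 'M[R]_(r, n)) (T : 'I_r -> 'I_n) : Prop :=
  injective T /\ colsub T A \in unitmx /\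
  forall (i : 'I_r) (j : 'I_n), (forall k, T k != j) ->
    colsub (swap_idx T i j) A \in unitmx ->
    mnorm1 (invmx (colsub T A)) <= mnorm1 (invmx (colsub (swap_idx T i j) A)).

(* Main.v *)
Require Import Defs.
From mathcomp Require Import all_boot all_order all_algebra.
From mathcomp Require Import reals.
From mathcomp Require Import ring lra zify.
Import Order.TTheory GRing.Theory Num.Theory.
Local Open Scope ring_scope.

Lemma free_of_ker (F : fieldType) m n (A : 'M[F]_(m, n)) :
  (forall x : 'rV_m, x *m A = 0 -> x = 0) -> row_free A.
Proof.
move=> H; rewrite -kermx_eq0; apply/eqP/row_matrixP => i.
by rewrite row0; apply: H; rewrite -row_mul mulmx_ker row0.
Qed.

Definition bval (R : realFieldType) (p q : nat) : R :=
  if (p == q) && (q != 0%N) then -1 else 1.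

Definition B0 (R : realFieldType) r : 'M[R]_r := \matrix_(p, q) bval R p q.

Lemma B0_unit (R : realFieldType) r : (0 < r)%N -> B0 R r \in unitmx.
Proof.
move=> r0; rewrite -row_free_unit; apply: free_of_ker => x Hx.
have Hq : forall q : 'I_r, (x *m B0 R r) 0 q =
   \sum_p x 0 p - (if val q != 0%N then 2 * x 0 q else 0).
  move=> q; rewrite mxE; case: ifP => Hq.
  - rewrite (bigD1 q) //= [X in _ = X - _](bigD1 q) //= mxE /bval eqxx Hq /=.
    rewrite (eq_bigr (fun p => x 0 p)); last first.
      move=> p Hp; rewrite mxE /bval; case: eqP => [E|]; last by rewrite mulr1.
      by move: Hp; rewrite (_ : p = q) ?eqxx //; apply: val_inj.
    by rewrite mulrN1; ring.
  - rewrite subr0; apply: eq_bigr => p _; by rewrite mxE /bval Hq andbF mulr1.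
set S := \sum_p x 0 p in Hq.
pose q0 : 'I_r := Ordinal r0.
have HS : S = 0 by move: (Hq q0); rewrite Hx mxE /= subr0 => <-.
have Hne : forall q : 'I_r, q != q0 -> x 0 q = 0.
  move=> q Hq0; move: (Hq q); rewrite Hx mxE HS.
  have -> : val q != 0%N by [].
  move=> /eqP; rewrite eq_sym subr_eq0 eq_sym mulf_eq0 pnatr_eq0 /=.
  by move/eqP.
apply/rowP => q; rewrite mxE.
case: (eqVneq q q0) => [->|Hq0]; last exact: Hne.
move: HS; rewrite /S (bigD1 q0) //= big1 ?addr0 //.
Qed.

Lemma mnorm1_ge0 (R : realFieldType) m n (X : 'M[R]_(m, n)) : 0 <= mnorm1 X.
Proof. by apply: sumr_ge0 => i _; apply: sumr_ge0 => j _. Qed.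

Lemma mnorm1Z (R : realFieldType) m n (a : R) (X : 'M[R]_(m, n)) :
  mnorm1 (a *: X) = `|a| * mnorm1 X.
Proof.
rewrite /mnorm1 mulr_sumr; apply: eq_bigr => i _; rewrite mulr_sumr.
by apply: eq_bigr => j _; rewrite mxE normrM.
Qed.

Lemma mnorm1_1 (R : realFieldType) r : mnorm1 (1%:M : 'M[R]_r) = r%:R.
Proof.
rewrite /mnorm1 (eq_bigr (fun _ => 1)) ?sumr_const ?card_ord //.
move=> i _; rewrite (bigD1 i) //= big1 ?addr0; first by rewrite mxE eqxx normr1.
by move=> j Hj; rewrite mxE eq_sym (negbTE Hj) normr0.
Qed.

Lemma row_lb (R : numDomainType) r (N : 'M[R]_r) (k i : 'I_r) :
  k != i -> `|N k i| = 1 -> `|N k k| = 1 -> 2%:R <= \sum_l (`|N k l| : R).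
Proof.
move=> Hk h1 h2.
have s0 : 0 <= \sum_(l < r | (l != i) && (l != k)) (`|N k l| : R).
  by apply: sumr_ge0.
rewrite (bigD1 i) //= (bigD1 k) 1?eq_sym //=.
apply: le_trans (lerD (lexx `|N k i|) (lerD (lexx `|N k k|) s0)).
by rewrite addr0 h1 h2.
by rewrite eq_sym.
Qed.

Lemma swap_bound (R : realFieldType) r (M : 'M[R]_r) (i : 'I_r) (c : R) :
  (2 <= r)%N -> M \in unitmx ->
  (forall p l, l != i -> M p l = (p == l)%:R) ->
  (forall p, `|M p i| = c) -> 0 < c ->
  r%:R <= mnorm1 (invmx M).
Proof.
move=> r2 Mu HM Hc c0.
set N := invmx M.
have NM : N *m M = 1%:M by apply: mulVmx.
clearbody N.
have Nl : forall k l, l != i -> N k l = (k == l)%:R.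
  move=> k l Hl; move/matrixP: NM => /(_ k l); rewrite !mxE => <-.
  rewrite (bigD1 l) //= big1 ?addr0; first by rewrite HM // eqxx mulr1.
  by move=> p Hp; rewrite HM // (negbTE Hp) mulr0.
have Ni : forall k, k != i -> `|N k i| = 1.
  move=> k Hk; move/matrixP: NM => /(_ k i); rewrite !mxE (negbTE Hk).
  rewrite (bigD1 i) //= (bigD1 k) //= big1 ?addr0; last first.
    by move=> p /andP [Hp Hpk]; rewrite Nl // eq_sym (negbTE Hpk) mul0r.
  rewrite (Nl k k) // eqxx mul1r => /eqP; rewrite addr_eq0 => /eqP E.
  have : `|N k i| * c = c by rewrite -(Hc i) -normrM E normrN Hc.
  move/eqP; rewrite -subr_eq0 -{2}(mul1r c) -mulrBl mulf_eq0 subr_eq0.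
  by rewrite (gt_eqF c0) orbF => /eqP.
apply: (@le_trans _ _ (\sum_(k | k != i) 2%:R)).
  rewrite sumr_const cardC1 card_ord.
  have -> : (2%:R : R) *+ r.-1 = (2 * r.-1)%:R by rewrite natrM mulr_natr.
  rewrite ler_nat.
  lia.
rewrite /mnorm1 [X in _ <= X](bigD1 i) //= ler_wpDl //.
  by apply: sumr_ge0 => j _.
apply: ler_sum => k Hk.
have h2 : `|N k k| = 1 by rewrite (Nl k k) ?eqxx ?normr1.
have := @row_lb R r N k i Hk (Ni k Hk) h2.
exact.
Qed.

Lemma zero_col_not_unit (R : realFieldType) r (M : 'M[R]_r) (i : 'I_r) :
  (forall p, M p i = 0) -> M \in unitmx -> False.
Proof.
move=> H Mu; move/matrixP: (mulVmx Mu) => /(_ i i); rewrite !mxE eqxx.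
rewrite big1 => [/eqP|p _]; first by rewrite eq_sym oner_eq0.
by rewrite H mulr0.
Qed.

Definition Aex (R : realFieldType) r n (c : R) : 'M[R]_(r, n) :=
  \matrix_(p, l) (if (l < r)%N then (p == l :> nat)%:R
                  else if (l < 2 * r)%N then c * bval R p (l - r) else 0).

Arguments Aex {R} r n c.

Lemma AexE (R : realFieldType) r n (c : R) p l :
  Aex r n c p l = if (l < r)%N then (p == l :> nat)%:R
                  else if (l < 2 * r)%N then c * bval R p (l - r) else 0.
Proof. by rewrite mxE. Qed.

Theorem theorem6p5 (R : realType) (r n : nat) (K : R) :
  (2 <= r)%N -> (2 * r <= n)%N -> 0 < K ->
  exists (A : 'M[R]_(r, n)) (T T' : 'I_r -> 'I_n),
    \rank A = r /\
    local_min_inv1 A T /\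
    injective T' /\ colsub T' A \in unitmx /\
    mnorm1 (invmx (colsub T A)) >= K * mnorm1 (invmx (colsub T' A)).
Proof.
move=> r2 Hn K0.
have Hrn : (r <= n)%N by lia.
have HT' : forall k : 'I_r, (r + k < n)%N by move=> k; have := ltn_ord k; lia.
pose T := fun k : 'I_r => widen_ord Hrn k.
pose T' := fun k : 'I_r => Ordinal (HT' k).
pose m := mnorm1 (invmx (B0 R r)).
have m0 : 0 <= m by apply: mnorm1_ge0.
have rpos : (0 < r%:R :> R) by rewrite ltr0n; lia.
pose c := K * m / r%:R + 1.
have c0 : 0 < c.
  rewrite /c ltr_wpDl // divr_ge0 // ?mulr_ge0 // ltW //.
have cu : c \is a GRing.unit by rewrite unitfE gt_eqF.
have B0u := B0_unit R r (ltnW r2).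
have AT : colsub T (Aex r n c) = 1%:M.
  apply/matrixP => p l; rewrite !mxE ?AexE /= ltn_ord.
  by [].
have AT' : colsub T' (Aex r n c) = c *: B0 R r.
  apply/matrixP => p l; rewrite !mxE ?AexE /=.
  have -> : (r + l < r)%N = false by rewrite ltnNge leq_addr.
  have -> : (r + l < 2 * r)%N by have := ltn_ord l; lia.
  by rewrite addKn.
exists (Aex r n c), T, T'.
split.
  apply/eqP; apply: free_of_ker => x Hx.
  have : x *m colsub T (Aex r n c) = 0.
    by rewrite mulmx_colsub Hx; apply/matrixP => ? ?; rewrite !mxE.
  by rewrite AT mulmx1.
split.
  split.
    by move=> a b H; apply: val_inj; move: (congr1 val H).
  split; first by rewrite AT unitmx1.
  move=> i j Hj Hu; rewrite AT invmx1 mnorm1_1.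
  have jr : (r <= j)%N.
    case: leqP => // h; move: (Hj (Ordinal h)) => /eqP; case.
    by apply: val_inj.
  case: (ltnP j (2 * r)) => h.
    apply: (@swap_bound R r _ i c r2 Hu) => //.
      by move=> p l Hl; rewrite !mxE /swap_idx (negbTE Hl) ?AexE /= ltn_ord.
    move=> p; rewrite !mxE /swap_idx eqxx ?AexE ltnNge jr /= h normrM gtr0_norm //.
    by rewrite /bval; case: ifP => _; rewrite ?normrN normr1 mulr1.
  exfalso; apply: (@zero_col_not_unit R r _ i _ Hu) => p.
  by rewrite !mxE /swap_idx eqxx ?AexE ltnNge jr /= ltnNge h.
split.
  by move=> a b H; apply: val_inj; move: (congr1 val H) => /= /addnI.
split; first by rewrite AT' unitmxZ.
rewrite AT invmx1 mnorm1_1 AT' invmxZ ?unitmxZ // mnorm1Z.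
rewrite gtr0_norm ?invr_gt0 // -/m.
rewrite [c^-1 * m]mulrC mulrA ler_pdivrMr //.
have -> : r%:R * c = K * m + r%:R.
  rewrite /c; field; exact: lt0r_neq0.
by rewrite lerDl.
Qed.
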